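(* Problem (RO-$\Sigma$) has a feasible solution with $B\le N(N+1)/2$.
   Context: A ballot style consists of contests $\mathcal{C}=\{1,\ldots,C\}$, candidates $\mathcal{N}=\{1,\ldots,N\}$ partitioned into nonempty sets $\mathcal{N}_c$ ($c\in\mathcal{C}$), and positive integers $v_c$. A filled-out ballot is a subset $\beta\subseteq\mathcal{N}$; $\mathscr{B}=\{\beta\subseteq\mathcal{N}: |\mathcal{N}_c\cap\beta|\le v_c\ \forall c\}$. For $i\in\mathcal{N}_c$: $T^*_i(\beta_1,\ldots,\beta_B)=\sum_{b=1}^B\mathbb{I}\{i\in\beta_b\text{ and }|\mathcal{N}_c\cap\beta_b|\le v_c\}$, and for a bijection $\sigma$ of $\mathcal{N}$, $T^\sigma_i(\beta_1,\ldots,\beta_B)=\sum_{b=1}^B\mathbb{I}\{\sigma(i)\in\beta_b\text{ and }|\{\sigma(j)\in\beta_b: j\in\mathcal{N}_c\}|\le v_c\}$. $\Sigma$ is the set of non-identity bijections $\mathcal{N}\to\mathcal{N}$. Problem (RO-$\Sigma$): minimize $B$ over $B\in\mathbb{N}$ and $\beta_1,\ldots,\beta_B\in\mathscr{B}$ subject to $T^\sigma(\beta_1,\ldots,\beta_B)\neq T^*(\beta_1,\ldots,\beta_B)$ for all $\sigma\in\Sigma$. *)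

(* Defs.v *)
From mathcomp Require Import all_boot all_order all_fingroup.
Set Implicit Arguments. Unset Strict Implicit. Unset Printing Implicit Defensive.

(* Candidates are 'I_N, contests are 'I_C; [con i] is the contest of candidate i,
   so N_c = [set i | con i == c]; [v c] is the number of votes allowed in c.
   A filled-out ballot is a set of candidates [beta : {set 'I_N}]. *)

Definition cands_in (N C : nat) (con : 'I_N -> 'I_C) (c : 'I_C) : {set 'I_N} :=
  [set i | con i == c].

Definition valid_ballot (N C : nat) (con : 'I_N -> 'I_C) (v : 'I_C -> nat)
  (beta : {set 'I_N}) : bool :=
  [forall c : 'I_C, #|cands_in con c :&: beta| <= v c].

Definition Tstar (N C : nat) (con : 'I_N -> 'I_C) (v : 'I_C -> nat)
  (bs : seq {set 'I_N}) (i : 'I_N) : nat :=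
  count (fun beta : {set 'I_N} => (i \in beta) && (#|cands_in con (con i) :&: beta| <= v (con i))) bs.

Definition Tsig (N C : nat) (con : 'I_N -> 'I_C) (v : 'I_C -> nat)
  (s : {perm 'I_N}) (bs : seq {set 'I_N}) (i : 'I_N) : nat :=
  count (fun beta : {set 'I_N} => (s i \in beta) &&
     (#|[set j | (con j == con i) && (s j \in beta)]| <= v (con i))) bs.

(* Main.v *)
Require Import Defs.
From mathcomp Require Import all_boot all_order all_fingroup.

Section H.
Variable N : nat.
Definition bsN : seq {set 'I_N} :=
  flatten [seq nseq k.+1 [set k] | k : 'I_N <- enum 'I_N].

Lemma count_bsN (P : pred {set 'I_N}) :
  count P bsN = \sum_(k < N) k.+1 * P [set k].
Proof.
rewrite /bsN count_flatten -map_comp.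
rewrite (_ : sumn _ = \sum_(k <- enum 'I_N) (k.+1 * P [set k])).
  by rewrite big_enum.
rewrite sumnE big_map; apply: eq_bigr => k _ /=.
by rewrite count_nseq mulnC.
Qed.

Lemma sum_pt (x : 'I_N) : \sum_(k < N) k.+1 * (k == x) = x.+1.
Proof.
rewrite (bigD1 x) //= eqxx muln1 big1 ?addn0 // => k /negbTE ->.
by rewrite muln0.
Qed.

Lemma sumS n : \sum_(k < n) k.+1 = 'C(n.+1, 2).
Proof.
elim: n => [|n IH]; first by rewrite big_ord0.
by rewrite big_ord_recr /= IH [in RHS]binS bin1 addnC.
Qed.

Lemma size_bsN : size bsN = N * (N + 1) %/ 2.
Proof.
rewrite -(count_predT bsN) count_bsN.
rewrite (eq_bigr (fun k : 'I_N => k.+1)); last by move=> k _; rewrite muln1.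
by rewrite sumS bin2 /= -divn2 addn1 mulnC.
Qed.
End H.

Lemma Tstar_bsN N C (con : 'I_N -> 'I_C) v (Hv : forall c, 0 < v c) i :
  Tstar con v (bsN N) i = i.+1.
Proof.
rewrite /Tstar count_bsN -sum_pt; apply: eq_bigr => k _.
rewrite in_set1 eq_sym; case: eqP => //= _.
have -> : #|cands_in con (con i) :&: [set k]| <= v (con i) => //.
apply: leq_trans (Hv (con i)); rewrite -(cards1 k); apply: subset_leq_card.
exact: subsetIr.
Qed.

Lemma Tsig_bsN N C (con : 'I_N -> 'I_C) v (Hv : forall c, 0 < v c) s i :
  Tsig con v s (bsN N) i = (s i).+1.
Proof.
rewrite /Tsig count_bsN -sum_pt; apply: eq_bigr => k _.
rewrite in_set1 eq_sym; case: eqP => //= ->.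
have -> : #|[set j | (con j == con i) && (s j \in [set s i])]| <= v (con i) => //.
apply: leq_trans (Hv (con i)); rewrite -(cards1 i); apply: subset_leq_card.
apply/subsetP => j; rewrite !inE => /andP[_ /eqP /perm_inj ->]; exact: eqxx.
Qed.

Theorem proposition4 (N C : nat) (con : 'I_N -> 'I_C) (v : 'I_C -> nat)
  (Hsurj : forall c : 'I_C, exists i : 'I_N, con i = c)
  (Hv : forall c : 'I_C, 0 < v c) :
  exists bs : seq {set 'I_N},
    [/\ size bs <= N * (N + 1) %/ 2,
        all (valid_ballot con v) bs &
        forall s : {perm 'I_N}, s != 1%g -> Tsig con v s bs <> Tstar con v bs].
Proof.
exists (bsN N); split.
- by rewrite size_bsN.
- apply/allP => b; rewrite /bsN => /flattenP [l /mapP [k _ ->]].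
  move/nseqP => [-> _]; apply/forallP => c.
  apply: leq_trans (Hv c); rewrite -(cards1 k); apply: subset_leq_card.
  exact: subsetIr.
- move=> s sn1 E; apply/negP: sn1; rewrite negbK; apply/eqP/permP => i.
  have := congr1 (fun f => f i) E; rewrite /= Tsig_bsN // Tstar_bsN // perm1.
  by case=> /val_inj.
Qed.
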